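(* For $i=1,2$ let $\delta_i:[0,1]\to[0,1]$ be the diagonal section of some 2-copula such that $t\mapsto\delta_i(t)/t$ is increasing on $(0,1]$ and $t\mapsto\delta_i(t)/t^2$ is decreasing on $(0,1]$, and let $C_i(u_1,u_2)=\min(u_1,u_2)\,\delta_i(\max(u_1,u_2))/\max(u_1,u_2)$ (with $C_i(0,0)=0$) be the corresponding semilinear copulas. If $C_1<_{TD}C_2$, then $C_1\le_{loc}C_2$.
   Context: A 2-copula is a grounded, 2-increasing function $C:[0,1]^2\to[0,1]$ with uniform margins; its diagonal section is $\delta(t)=C(t,t)$. Under the stated monotonicity conditions, the semilinear function $C_i$ is a 2-copula with diagonal $\delta_i$, and it admits the tail dependence function $\Lambda(\boldsymbol w;C_i)=\min(w_1,w_2)\lim_{t\searrow0}\delta_i(t)/t$. In general $\Lambda(\boldsymbol w;C)=\lim_{s\searrow0}C(s\boldsymbol w)/s$. $C_1<_{TD}C_2$ means $\Lambda(\boldsymbol w;C_1)<\Lambda(\boldsymbol w;C_2)$ for all $\boldsymbol w\in(0,\infty)^2$. $C_1\le_{loc}C_2$ means there is $\varepsilon>0$ with $C_1\le C_2$ on $B_\varepsilon(\boldsymbol 0)\cap[0,1]^2$ (Euclidean ball). *)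

(* Defs.v *)
From Stdlib Require Import Reals Lra.
From Coquelicot Require Import Coquelicot.
Open Scope R_scope.

Definition in01 (x : R) : Prop := 0 <= x <= 1.

Definition is_copula2 (C : R -> R -> R) : Prop :=
  (forall u v, in01 u -> in01 v -> in01 (C u v)) /\
  (forall u, in01 u -> C u 0 = 0 /\ C 0 u = 0) /\
  (forall u, in01 u -> C u 1 = u /\ C 1 u = u) /\
  (forall u1 u2 v1 v2, in01 u1 -> in01 u2 -> in01 v1 -> in01 v2 ->
     u1 <= u2 -> v1 <= v2 ->
     0 <= C u2 v2 - C u2 v1 - C u1 v2 + C u1 v1).

Definition is_diagonal_of_copula (delta : R -> R) : Prop :=
  exists C, is_copula2 C /\ forall t, in01 t -> delta t = C t t.

Definition incr_on_0_1 (f : R -> R) : Prop :=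
  forall s t, 0 < s -> s <= t -> t <= 1 -> f s <= f t.
Definition decr_on_0_1 (f : R -> R) : Prop :=
  forall s t, 0 < s -> s <= t -> t <= 1 -> f t <= f s.

Definition semilinear (delta : R -> R) (u v : R) : R :=
  if Req_EM_T (Rmax u v) 0 then 0
  else Rmin u v * delta (Rmax u v) / Rmax u v.

Definition is_tdf (C : R -> R -> R) (w1 w2 l : R) : Prop :=
  filterlim (fun s => C (s * w1) (s * w2) / s) (at_right 0) (locally l).

Definition TD_lt (C1 C2 : R -> R -> R) : Prop :=
  forall w1 w2, 0 < w1 -> 0 < w2 ->
    exists l1 l2, is_tdf C1 w1 w2 l1 /\ is_tdf C2 w1 w2 l2 /\ l1 < l2.

Definition loc_le (C1 C2 : R -> R -> R) : Prop :=
  exists eps, 0 < eps /\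
    forall u v, in01 u -> in01 v -> sqrt (u ^ 2 + v ^ 2) < eps ->
      C1 u v <= C2 u v.

(* Main.v *)
Require Import Defs.
From Stdlib Require Import Reals Lra.
From Coquelicot Require Import Coquelicot.
Open Scope R_scope.

Theorem mainTheorem8 (delta1 delta2 : R -> R) :
  is_diagonal_of_copula delta1 -> is_diagonal_of_copula delta2 ->
  incr_on_0_1 (fun t => delta1 t / t) -> decr_on_0_1 (fun t => delta1 t / t ^ 2) ->
  incr_on_0_1 (fun t => delta2 t / t) -> decr_on_0_1 (fun t => delta2 t / t ^ 2) ->
  TD_lt (semilinear delta1) (semilinear delta2) ->
  loc_le (semilinear delta1) (semilinear delta2).
Proof.
  intros _ _ _ _ _ _ HTD.
  destruct (HTD 1 1 Rlt_0_1 Rlt_0_1) as [l1 [l2 [H1 [H2 Hl]]]].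
  unfold is_tdf in H1, H2.
  assert (He : 0 < (l2 - l1) / 2) by lra.
  pose (e := mkposreal _ He).
  apply filterlim_locally with (eps := e) in H1.
  apply filterlim_locally with (eps := e) in H2.
  destruct (filter_and _ _ H1 H2) as [d Hd].
  exists d. split; [apply cond_pos|].
  intros u v Hu Hv Hs.
  unfold in01 in Hu, Hv.
  unfold semilinear.
  destruct (Req_EM_T (Rmax u v) 0) as [E|E]; [lra|].
  set (m := Rmax u v) in *.
  assert (Hm0 : 0 < m).
  { unfold m in *; pose proof (Rmax_l u v); destruct (Rle_lt_or_eq_dec 0 (Rmax u v)); [lra|lra|congruence]. }
  assert (Hmd : m < d).
  { apply Rle_lt_trans with (2 := Hs).
    rewrite <- (sqrt_pow2 m) by lra. apply sqrt_le_1_alt.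
    unfold m; destruct (Rle_dec u v).
    - rewrite Rmax_right by lra. simpl. nra.
    - rewrite Rmax_left by lra. simpl. nra. }
  assert (Hb : ball 0 d m).
  { unfold ball; simpl; unfold AbsRing_ball, abs, minus, plus, opp; simpl.
    rewrite Ropp_0, Rplus_0_r, Rabs_pos_eq; lra. }
  destruct (Hd m Hb Hm0) as [B1 B2].
  revert B1 B2.
  unfold ball; simpl; unfold AbsRing_ball, abs, minus, plus, opp; simpl.
  rewrite !Rmult_1_r.
  unfold semilinear. rewrite Rmax_left by lra.
  destruct (Req_EM_T m 0) as [E'|E']; [lra|].
  rewrite Rmin_left by lra.
  intros B1 B2.
  apply Rabs_def2 in B1. apply Rabs_def2 in B2.
  assert (Hmin : 0 <= Rmin u v) by (apply Rmin_glb; lra).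
  unfold Rdiv in *. rewrite !Rmult_assoc.
  apply Rmult_le_compat_l; [exact Hmin|].
  rewrite !(Rmult_comm m) in B1, B2.
  unfold e in *; simpl in *.
  assert (delta1 m * / m <= delta2 m * /m).
  { replace (delta1 m * m * / m * / m) with (delta1 m * / m) in B1 by (field; lra).
    replace (delta2 m * m * / m * / m) with (delta2 m * / m) in B2 by (field; lra).
    lra. }
  lra.
Qed.
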